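(* Let $\mathcal{H}$ and $\mathcal{H}'$ be finite-dimensional Hilbert spaces, and let $\Phi:\mathcal{B}(\mathcal{H})\to\mathcal{B}(\mathcal{H}')$ be a quantum channel (a completely positive trace-preserving map). Let $\rho_{\text{in}}=\sum_{i=1}^{r}p_i|p_i\rangle\langle p_i|$ be a density matrix on $\mathcal{H}$ of rank $r$, where $\{|p_i\rangle\}_{i=1}^r$ are orthonormal, $0<p_i\leq 1$ and $\sum_{i=1}^r p_i=1$, and let $\rho_{\text{out}}=\Phi(\rho_{\text{in}})$. Define the information production $\Delta S\equiv S(\rho_{\text{out}})-S(\rho_{\text{in}})$ and the distribution $$\widetilde{P}(\sigma)\equiv\sum_{i=1}^{r}p_i\,\delta\big(\sigma-C(\Phi(|p_i\rangle\langle p_i|),\rho_{\text{out}})-\ln p_i\big),$$ i.e. $\sigma$ takes the value $\sigma_i=C(\Phi(|p_i\rangle\langle p_i|),\rho_{\text{out}})+\ln p_i$ with probability $p_i$, and write $\langle f(\sigma)\rangle_{\widetilde{P}}=\int d\sigma\,\widetilde{P}(\sigma)f(\sigma)=\sum_{i=1}^r p_i f(\sigma_i)$. Then $$\langle e^{-\sigma}\rangle_{\widetilde{P}}=\sum_{i=1}^{r}e^{-C(\Phi(|p_i\rangle\langle p_i|),\rho_{\text{out}})},$$ and consequently $\Delta S\geq L_{\text{otm}}$, where $$L_{\text{otm}}\equiv-\ln\Big(\sum_{i=1}^{r}e^{-C(\Phi(|p_i\rangle\langle p_i|),\rho_{\text{out}})}\Big).$$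
   Context: $\mathcal{B}(\mathcal{H})$ denotes the set of density matrices on $\mathcal{H}$. $S(\rho)\equiv-\mathrm{Tr}[\rho\ln\rho]$ is the von Neumann entropy. $C(\rho_1,\rho_2)\equiv-\mathrm{Tr}[\rho_1\ln\rho_2]$ is the quantum cross entropy of $\rho_1$ with respect to $\rho_2$; it is finite when $\mathrm{supp}(\rho_1)\subseteq\mathrm{supp}(\rho_2)$ (with $\ln\rho_2$ taken on the support of $\rho_2$) and equals $+\infty$ otherwise. Since $\rho_{\text{out}}=\sum_i p_i\Phi(|p_i\rangle\langle p_i|)$, each $C(\Phi(|p_i\rangle\langle p_i|),\rho_{\text{out}})$ is finite. *)

(* Defs.v *)
From HB Require Import structures.
From mathcomp Require Import all_boot all_order all_algebra.
From mathcomp Require Import sesquilinear spectral.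
From mathcomp.real_closed Require Import complex.
From mathcomp Require Import reals sequences exp.

Set Implicit Arguments.
Unset Strict Implicit.
Unset Printing Implicit Defensive.

Import Order.TTheory GRing.Theory Num.Theory ComplexField.
Local Open Scope ring_scope.
Local Open Scope sesquilinear_scope.

Section Quantum.
Variable R : realType.
Local Notation C := R[i].

Definition adjmx p q (M : 'M[C]_(p, q)) : 'M[C]_(q, p) := M ^t*.

Definition psd n (A : 'M[C]_n) : Prop :=
  A \is hermsymmx /\ forall v : 'cV[C]_n, 0 <= (adjmx v *m A *m v) 0 0.

Definition density n (rho : 'M[C]_n) : Prop := psd rho /\ \tr rho = 1.

Definition ketbra n (v : 'cV[C]_n) : 'M[C]_n := v *m adjmx v.

(* id_k (x) Phi acting on block matrices 'M_(k n) (k x k blocks of size n) *)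
Definition ampl n m k (Phi : 'M[C]_n -> 'M[C]_m)
  (X : 'M[C]_(\sum_(i < k) n)) : 'M[C]_(\sum_(i < k) m) :=
  \mxblock_(i < k, j < k) Phi (submxblock X i j).

Definition completely_positive n m (Phi : 'M[C]_n -> 'M[C]_m) : Prop :=
  forall k (X : 'M[C]_(\sum_(i < k) n)), psd X -> psd (ampl Phi X).

Definition trace_preserving n m (Phi : 'M[C]_n -> 'M[C]_m) : Prop :=
  forall X, \tr (Phi X) = \tr X.

Definition quantum_channel n m (Phi : {linear 'M[C]_n -> 'M[C]_m}) : Prop :=
  completely_positive Phi /\ trace_preserving Phi.

Definition ln_supp (x : R) : R := if 0 < x then ln x else 0.

(* matrix logarithm on the support, via the spectral decomposition
   A = U^-1 diag(d) U (U unitary) of the normal (here Hermitian) matrix A *)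
Definition mlog n (A : 'M[C]_n) : 'M[C]_n :=
  invmx (spectralmx A) *m
    diag_mx (map_mx (fun z : C => ((ln_supp (complex.Re z))%:C)%C) (spectral_diag A)) *m
    spectralmx A.

Definition vn_entropy n (rho : 'M[C]_n) : R := - complex.Re (\tr (rho *m mlog rho)).

(* quantum cross entropy C(rho1, rho2) = - Tr[rho1 ln rho2], ln taken on the
   support of rho2; this is the (finite) value when supp rho1 <= supp rho2 *)
Definition cross_entropy n (rho1 rho2 : 'M[C]_n) : R :=
  - complex.Re (\tr (rho1 *m mlog rho2)).

End Quantum.

(* Main.v *)
Require Import Defs.
From HB Require Import structures.
From mathcomp Require Import all_boot all_order all_algebra.
From mathcomp Require Import sesquilinear spectral.
From mathcomp.real_closed Require Import complex.
From mathcomp Require Import reals sequences exp.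
From mathcomp Require Import ring.
Import Order.TTheory GRing.Theory Num.Theory ComplexField.
Local Open Scope ring_scope.
Local Open Scope sesquilinear_scope.

Section H.
Variable R : realType.
Local Notation C := R[i].

Lemma ReD (x y : C) : complex.Re (x + y) = complex.Re x + complex.Re y.
Proof. by case: x; case: y. Qed.

Lemma Re_sum (I : Type) (r : seq I) (P : pred I) (F : I -> C) :
  complex.Re (\sum_(i <- r | P i) F i) = \sum_(i <- r | P i) complex.Re (F i).
Proof. exact: (big_morph _ ReD). Qed.

Lemma ReMC (x : R) (z : C) : complex.Re ((x%:C)%C * z) = x * complex.Re z.
Proof. by case: z => a b /=; rewrite mul0r subr0. Qed.

Lemma adj_ketbra n (v : 'cV[C]_n) : (ketbra v)^t* = ketbra v.
Proof.
rewrite /ketbra /adjmx trmx_mul map_mxM map_trmx trmxK -map_mx_comp.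
by rewrite (map_mx_id (@conjCK _)).
Qed.

Lemma conjC_realC (x : R) : ((x%:C)%C)^* = (x%:C)%C.
Proof. exact: conjc_real. Qed.

Lemma sum_ketbra_normal r (c : 'I_r -> R) n (ket : 'I_r -> 'cV[C]_n) :
  (\sum_(i < r) ((c i)%:C)%C *: ketbra (ket i)) \is normalmx.
Proof.
set A := \sum__ _.
suff AE : A^t* = A by apply/normalmxP; rewrite AE.
rewrite /A linear_sum /= map_mx_sum; apply: eq_bigr => i _.
by rewrite linearZ /= map_mxZ /= conjC_realC adj_ketbra.
Qed.

Lemma sum_ketbra_eig r (c : 'I_r -> C) n (ket : 'I_r -> 'cV[C]_n) i :
  (forall i j, adjmx (ket i) *m ket j = (i == j)%:R%:M) ->
  (\sum_(j < r) c j *: ketbra (ket j)) *m ket i = c i *: ket i.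
Proof.
move=> orth; rewrite mulmx_suml (bigD1 i) //= big1 ?addr0.
  by rewrite -scalemxAl /ketbra -mulmxA orth eqxx mulmx1.
move=> j /negbTE ji; rewrite -scalemxAl /ketbra -mulmxA orth ji.
by rewrite mul_mx_scalar scale0r scaler0.
Qed.

Lemma mlog_eig n (A : 'M[C]_n) (v : 'cV[C]_n) (x : R) :
  A \is normalmx -> A *m v = (x%:C)%C *: v -> 0 < x ->
  mlog A *m v = ((ln x)%:C)%C *: v.
Proof.
move=> /orthomx_spectralP AE Av x0.
set U := spectralmx A in AE *; set d := spectral_diag A in AE *.
have Uu : U \in unitmx by exact: spectral_unit.
have Dw : diag_mx d *m (U *m v) = (x%:C)%C *: (U *m v).
  have UA : U *m A = diag_mx d *m U.
    by rewrite {1}AE !mulmxA mulmxV // mul1mx.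
  by rewrite mulmxA -UA -mulmxA Av scalemxAr.
rewrite /mlog -/U -/d -!mulmxA.
have -> : diag_mx (map_mx (fun z : C => ((ln_supp (complex.Re z))%:C)%C) d)
   *m (U *m v) = ((ln x)%:C)%C *: (U *m v).
  move: Dw; set w := U *m v => Dw; clearbody w.
  apply/matrixP => k l; move/matrixP: Dw => /(_ k l).
  rewrite !mul_diag_mx !mxE.
  have [->|wk0] := eqVneq (w k l) 0; first by rewrite !mulr0.
  move/(mulIf wk0) => -> /=.
  by rewrite /ln_supp x0.
by rewrite -scalemxAr mulKmx.
Qed.

End H.

Theorem theorem1 (R : realType) (n m r : nat)
  (Phi : {linear 'M[R[i]]_n -> 'M[R[i]]_m})
  (p : 'I_r -> R) (ket : 'I_r -> 'cV[R[i]]_n) :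
  quantum_channel Phi ->
  (forall i j, adjmx (ket i) *m ket j = (i == j)%:R%:M) ->
  (forall i, 0 < p i <= 1) ->
  \sum_(i < r) p i = 1 ->
  let rho_in := \sum_(i < r) ((p i)%:C)%C *: ketbra (ket i) in
  let rho_out := Phi rho_in in
  let Cr i := cross_entropy (Phi (ketbra (ket i))) rho_out in
  let sigma i := Cr i + ln (p i) in
  let Delta_S := vn_entropy rho_out - vn_entropy rho_in in
  let L_otm := - ln (\sum_(i < r) expR (- Cr i)) in
  \sum_(i < r) p i * expR (- sigma i) = \sum_(i < r) expR (- Cr i) /\
  L_otm <= Delta_S.
Proof.
move=> _ orth pb psum rho_in rho_out Cr sigma Delta_S L_otm.
have pos i : 0 < p i by case/andP: (pb i).
have part1 : \sum_(i < r) p i * expR (- sigma i) = \sum_(i < r) expR (- Cr i).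
  apply: eq_bigr => i _; rewrite /sigma opprD expRD [expR (- ln _)]expRN lnK ?posrE ?pos //.
  by rewrite mulrC -mulrA mulVf ?mulr1 // gt_eqF.
split => //.
have Sout : vn_entropy rho_out = \sum_(i < r) p i * Cr i.
  rewrite /vn_entropy; set L := mlog rho_out.
  rewrite {1}/rho_out /rho_in (linear_sum Phi) mulmx_suml (raddf_sum (@mxtrace _ m)) Re_sum -sumrN.
  apply: eq_bigr => i _.
  by rewrite linearZ /= -scalemxAl mxtraceZ ReMC /Cr /cross_entropy -/L mulrN.
have Sin : vn_entropy rho_in = - \sum_(i < r) p i * ln (p i).
  rewrite /vn_entropy; set L := mlog rho_in.
  have nrm : rho_in \is normalmx by exact: sum_ketbra_normal.
  have HL i : L *m ket i = ((ln (p i))%:C)%C *: ket i.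
    have Hv : rho_in *m ket i = ((p i)%:C)%C *: ket i.
      exact: (@sum_ketbra_eig R r (fun j => ((p j)%:C)%C) n ket i orth).
    exact: (@mlog_eig R n rho_in (ket i) (p i) nrm Hv (pos i)).
  rewrite {1}/rho_in mulmx_suml (raddf_sum (@mxtrace _ n)) Re_sum; congr (- _).
  apply: eq_bigr => i _.
  rewrite -scalemxAl.
  transitivity (complex.Re (((p i)%:C)%C * \tr (ketbra (ket i) *m L))).
    by congr complex.Re; exact: mxtraceZ.
  rewrite ReMC /ketbra -mulmxA mxtrace_mulC -mulmxA HL.
  by rewrite -scalemxAr orth eqxx mxtraceZ mxtrace1 mulr1 /=.
pose mu := \sum_(i < r) p i * sigma i.
have DS : Delta_S = mu.
  rewrite /Delta_S Sout Sin opprK /mu -big_split /=.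
  by apply: eq_bigr => i _; rewrite /sigma mulrDr.
have ge : expR (- mu) <= \sum_(i < r) expR (- Cr i).
  rewrite -part1.
  have -> : expR (- mu) = \sum_(i < r) p i * (expR (- mu) * (1 + (mu - sigma i))).
    rewrite (eq_bigr (fun i => expR (- mu) * p i + expR (- mu) * mu * p i - expR (- mu) * (p i * sigma i))); last by move=> i _; ring.
    rewrite !big_split /= sumrN -!mulr_sumr psum -/mu; ring.
  apply: ler_sum => i _; apply: ler_wpM2l; first exact: ltW.
  have -> : expR (- sigma i) = expR (- mu) * expR (mu - sigma i).
    by rewrite -expRD addrA addNr add0r.
  apply: ler_wpM2l; first exact: expR_ge0.
  exact: expR_ge1Dx.
rewrite DS /L_otm lerNl -[X in X <= _](expRK (- mu)).
rewrite ler_ln ?posrE ?expR_gt0 //.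
exact: (lt_le_trans (expR_gt0 _) ge).
Qed.
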